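(* Let $1\le k\le d+1$ and let $\Delta_k^d=\operatorname{tconv}\{-e_I: I\subseteq[d+1],\ |I|=k\}\subseteq\mathbb{T}^d$ be the $k$-th tropical hypersimplex. Then $\Delta_k^d$ is the intersection of its $d+1$ cornered halfspaces and the tropical halfspaces $H(\mathbf{0},I)$ with $I$ ranging over all $(d-k+2)$-element subsets of $[d+1]$.
   Context: Tropical arithmetic is min-plus: $a\oplus b=\min(a,b)$, $a\odot b=a+b$; $\mathbb{T}^d=\mathbb{R}^{d+1}/\mathbb{R}(1,\dots,1)$; $\operatorname{tconv}\{v_1,\dots,v_n\}=\{\bigoplus_l\lambda_l\odot v_l:\lambda_l\in\mathbb{R}\}$ (componentwise minimum of $\lambda_l+v_l$). For $I\subseteq[d+1]$, $e_I=\sum_{i\in I}e_i$. For $p\in\mathbb{T}^d$ and nonempty $I\subseteq[d+1]$, the closed tropical halfspace with apex $p$ and type $I$ is $H(p,I)=\{x\in\mathbb{T}^d:\min_{i\in I}(x_i-p_i)\le\min_{j\notin I}(x_j-p_j)\}$ (minimum over the empty set is $+\infty$); equivalently $p+\bigcup_{i\in I}\bar S_i$ where $\bar S_i=\{\xi:\xi_i=\min_m\xi_m\}$. For a tropical polytope with generators $v_1,\dots,v_n$, its $m$-th corner is $c_m=\bigoplus_{l}(-v_{l,m})\odot v_l$ and its $m$-th cornered halfspace is $H(c_m,\{m\})=c_m+\bar S_m$. $\mathbf{0}$ denotes the origin of $\mathbb{T}^d$. *)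

(* Defs.v *)
From HB Require Import structures.
From mathcomp Require Import all_boot all_order all_algebra.
From mathcomp Require Import reals.
Set Implicit Arguments. Unset Strict Implicit. Unset Printing Implicit Defensive.
Import Order.TTheory GRing.Theory Num.Theory.
Local Open Scope ring_scope.

(* Points of T^d are represented by representatives in R^{d+1}, i.e.
   functions 'I_d.+1 -> R.  All sets below are invariant under adding
   a constant to every coordinate, so they are preimages of subsets of T^d. *)
Definition vec (R : realType) (n : nat) := 'I_n -> R.

Definition eI (R : realType) (n : nat) (I : {set 'I_n}) : vec R n :=
  fun i => if i \in I then 1 else 0.

(* x in tconv {v_j : j in J}  iff  x = (+)_j lam_j (.) v_j, i.e.
   for each coordinate m, x_m = min_j (lam_j + v_{j,m}). *)
Definition in_tconv (R : realType) (n : nat) (J : finType) (v : J -> vec R n)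
    (x : vec R n) : Prop :=
  exists lam : J -> R, forall m : 'I_n,
    (forall j, x m <= lam j + v j m) /\ (exists j, x m = lam j + v j m).

(* Closed tropical halfspace H(p, I) :
   min_{i in I} (x_i - p_i) <= min_{j notin I} (x_j - p_j)
   (min over the empty set = +oo), written out for nonempty finite I. *)
Definition in_halfspace (R : realType) (n : nat) (p : vec R n)
    (I : {set 'I_n}) (x : vec R n) : Prop :=
  exists2 i, i \in I & forall j, j \notin I -> x i - p i <= x j - p j.

(* c is the m-th corner of tconv {v_j}:
   c_i = min_l (v_{l,i} - v_{l,m})  (= ((+)_l (-v_{l,m}) (.) v_l)_i). *)
Definition is_corner (R : realType) (n : nat) (J : finType) (v : J -> vec R n)
    (m : 'I_n) (c : vec R n) : Prop :=
  forall i : 'I_n,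
    (forall l, c i <= v l i - v l m) /\ (exists l, c i = v l i - v l m).

Definition in_cornered_halfspace (R : realType) (n : nat) (J : finType)
    (v : J -> vec R n) (m : 'I_n) (x : vec R n) : Prop :=
  exists c, is_corner v m c /\ in_halfspace c [set m] x.

Definition ksets (n k : nat) := {I : {set 'I_n} | #|I| == k}.

Definition hypersimplex_gens (R : realType) (d k : nat) :
    ksets d.+1 k -> vec R d.+1 :=
  fun I => fun i => - eI R (val I) i.

Definition in_hypersimplex (R : realType) (d k : nat) (x : vec R d.+1) : Prop :=
  in_tconv (@hypersimplex_gens R d k) x.

(* Main.v *)
Require Import Defs.
From HB Require Import structures.
From mathcomp Require Import all_boot all_order all_algebra.
From mathcomp Require Import reals.
From mathcomp Require Import zify lra.
Import Order.TTheory GRing.Theory Num.Theory.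
Local Open Scope ring_scope.

Lemma ex_min {R : realType} {T : finType} (i0 : T) (f : T -> R) :
  exists i, forall j, f i <= f j.
Proof.
case: (@arg_minP _ R T i0 xpredT f isT) => i _ H.
by exists i => j; apply: H.
Qed.

Lemma ex_max {R : realType} {T : finType} (i0 : T) (f : T -> R) :
  exists i, forall j, f j <= f i.
Proof.
case: (@arg_maxP _ R T i0 xpredT f isT) => i _ H.
by exists i => j; apply: H.
Qed.

Lemma sub_card (T : finType) (p : nat) : forall (A B : {set T}),
  A \subset B -> (#|A| <= p <= #|B|)%N ->
  exists C : {set T}, [/\ A \subset C, C \subset B & #|C| = p].
Proof.
move=> A B; move Hn: (p - #|A|)%N => n; elim: n A Hn => [|n IH] A Hn AB /andP[h1 h2].
  by exists A; split => //; lia.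
have : ~~ (B \subset A).
  apply/negP => BA; move: (subset_leq_card BA); lia.
case/subsetPn => y yB yA.
have e1 : (p - #|y |: A|)%N = n by rewrite cardsU1 yA; lia.
have e2 : y |: A \subset B by rewrite subUset sub1set yB AB.
have e3 : (#|y |: A| <= p <= #|B|)%N by apply/andP; rewrite cardsU1 yA; lia.
have [C [s1 s2 s3]] := IH (y |: A) e1 e2 e3.
exists C; split => //.
by apply: subset_trans s1; apply: subsetUr.
Qed.

Lemma gens_ge {R : realType} (d k : nat) (l : ksets d.+1 k) i :
  (-1 <= @hypersimplex_gens R d k l i) /\ (@hypersimplex_gens R d k l i <= 0).
Proof. by rewrite /hypersimplex_gens /eI; case: ifP => _; split; lra. Qed.

Lemma gens_in {R : realType} {d k : nat} (l : ksets d.+1 k) i :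
  i \in val l -> @hypersimplex_gens R d k l i = -1.
Proof. by rewrite /hypersimplex_gens /eI => ->. Qed.

Theorem mainTheorem3 (R : realType) (d k : nat) (hk1 : (1 <= k)%N)
    (hk2 : (k <= d.+1)%N) :
  forall x : vec R d.+1,
    @in_hypersimplex R d k x <->
    ((forall m : 'I_d.+1,
        in_cornered_halfspace (@hypersimplex_gens R d k) m x) /\
     (forall I : {set 'I_d.+1}, #|I| = (d.+2 - k)%N ->
        in_halfspace (fun _ => 0) I x)).
Proof.
move=> x; set v := @hypersimplex_gens R d k; split.
- case=> lam H.
  have [l0 _] := (H ord0).2.
  split.
  + move=> m.
    pose c i := (fun l => v l i - v l m)
                  (Order.arg_min l0 xpredT (fun l => v l i - v l m)).
    have cmin i l : c i <= v l i - v l m.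
      rewrite /c; case: (@arg_minP _ R _ l0 xpredT (fun l => v l i - v l m) isT).
      by move=> j _ Hj; apply: Hj.
    have cex i : exists l, c i = v l i - v l m.
      by rewrite /c; eexists.
    exists c; split; first by move=> i; split; [apply: cmin | apply: cex].
    exists m; first by rewrite inE.
    move=> j _.
    have [l cm] := cex m.
    have [l' xj] := (H j).2.
    have h1 := (H m).1 l'.
    have h2 := cmin j l'.
    rewrite cm; lra.
  + move=> I hI.
    have [l1 hl1] := ex_min l0 lam.
    have lb m : lam l1 - 1 <= x m.
      have [l xm] := (H m).2; have := hl1 l; have [g1 g2] := gens_ge (R:=R) d k l m.
      rewrite -/v in g1 g2 *; rewrite xm; lra.
    have ub m : m \in val l1 -> x m <= lam l1 - 1.
      move=> mi; have := (H m).1 l1; rewrite /v gens_in //.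
    case: (boolP [exists i, (i \in I) && (i \in val l1)]).
      case/existsP => i /andP[iI il]; exists i => // j _.
      have := ub i il; have := lb j; lra.
    move=> /existsPn hn.
    have sub : val l1 \subset ~: I.
      apply/subsetP => i il; rewrite inE; apply/negP => iI.
      by move: (hn i); rewrite iI il.
    have c1 := cardsC I; rewrite card_ord hI in c1.
    have c2 := subset_leq_card sub; rewrite (eqP (valP l1)) in c2; lia.
- case=> Hc Hh.
  have [i0 hi0] := ex_min ord0 x.
  set a := x i0.
  have span m j : x m <= x j + 1.
    have [c [cc [i]]] := Hc m.
    rewrite inE => /eqP -> hj.
    case: (eqVneq j m) => [->|jm]; first lra.
    have := hj j; rewrite inE jm => /(_ isT).
    have [[_ [l cm]] [_ [l' cj]]] := (cc m, cc j).
    have [g1 g2] := gens_ge (R:=R) d k l' j; have [g3 g4] := gens_ge (R:=R) d k l' m.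
    rewrite -/v in g1 g2 g3 g4 *; rewrite cm cj; lra.
  set S := [set i | x i == a].
  have i0S : i0 \in S by rewrite inE.
  have cardS : (k <= #|S|)%N.
    rewrite leqNgt; apply/negP => hS.
    have [|J [SJ _ cJ]] := @sub_card _ (k - 1)%N S setT (subsetT _).
      by apply/andP; rewrite cardsT card_ord; lia.
    have cCJ : #|~: J| = (d.+2 - k)%N.
      have HH := cardsC J; rewrite card_ord cJ in HH.
      lia.
    have [i iI hi] := Hh (~: J) cCJ.
    have xi : x i <= a.
      have := hi i0; rewrite inE negbK (subsetP SJ _ i0S) => /(_ isT) /=; rewrite !subr0 /a; lra.
    have : i \in S by rewrite inE eq_le xi hi0.
    by move/(subsetP SJ); move: iI; rewrite inE => /negbTE ->.
  pose lam (l : ksets d.+1 k) := (fun j => x j + eI R (val l) j)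
       (Order.arg_max ord0 xpredT (fun j => x j + eI R (val l) j)).
  have lamP l : (forall j, x j + eI R (val l) j <= lam l) /\
                 exists j, lam l = x j + eI R (val l) j.
    rewrite /lam; case: (@arg_maxP _ R _ ord0 xpredT (fun j => x j + eI R (val l) j) isT).
    by move=> j _ Hj; split; [move=> j'; apply: Hj | exists j].
  exists lam => m; split.
    move=> l; have := (lamP l).1 m; rewrite /v /hypersimplex_gens.
    set e := eI R _ m; lra.
  have [|T [_ TS cT]] := @sub_card _ (k - 1)%N set0 (S :\ m) (sub0set _).
    apply/andP; rewrite cards0; split => //.
    have := cardsD1 m S; lia.
  have mT : m \notin T.
    by apply/negP => /(subsetP TS); rewrite in_setD1 eqxx.
  have cI : #|m |: T| == k by rewrite cardsU1 mT cT; apply/eqP; lia.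
  pose l : ksets d.+1 k := exist _ (m |: T) cI.
  exists l.
  have mI : m \in val l by rewrite /l /= setU11.
  rewrite /v gens_in //.
  have [h1 [j hj]] := lamP l.
  have := h1 m; rewrite /eI mI.
  move: hj; rewrite /eI; case: ifP => jI hj.
    have xj : x j <= x m.
      move: jI; rewrite /= !inE => /orP[/eqP -> | /(subsetP TS)]; first lra.
      rewrite !inE => /andP[_ /eqP ->]; apply: hi0.
    lra.
  have := span j i0; have := hi0 m; rewrite /a /=; move=> *; lra.
Qed.
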